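(* Let $\sigma^2>0$, $P_{\mathrm{tran}}>0$, $\theta_{\mathrm I}>0$, $\rho_{\mathrm{cont}}>0$, $\rho_{\mathrm{out}}\in(0,1)$, $N=\tau f_{\mathrm s}>0$ and $\gamma\ge0$, and let $$a_1=\frac{N(1+\gamma)^2}{2+4\gamma},\qquad b_1=\frac{\sigma^2(2+4\gamma)}{N(1+\gamma)}.$$ Assume $b_1P^{-1}(1-\rho_{\mathrm{out}},a_1)>\sigma^2$ and set $P^{*}=\dfrac{\theta_{\mathrm I}P_{\mathrm{tran}}}{b_1P^{-1}(1-\rho_{\mathrm{out}},a_1)-\sigma^2}$. Then the transmit power constraint $P^{*}\le\rho_{\mathrm{cont}}$ holds if and only if $$\rho_{\mathrm{out}}\le 1-P\!\left(a_1,\ \frac{1}{b_1}\Big(\frac{\theta_{\mathrm I}P_{\mathrm{tran}}}{\rho_{\mathrm{cont}}}+\sigma^2\Big)\right).$$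
   Context: $P(a,x)=\frac{1}{\Gamma(a)}\int_0^x t^{a-1}e^{-t}\,dt$ is the regularized lower incomplete Gamma function and $P^{-1}(y,a)$ is its inverse in the second argument ($P(a,P^{-1}(y,a))=y$ for $y\in(0,1)$). In the paper, $P^{*}$ is the power obtained from an outage constraint on the interference at the primary receiver when the received-power estimate is modeled as Gamma with shape $a_1$ and scale $b_1$; the set of $\gamma$ (for given $\tau$) satisfying the displayed inequality is called the operating regime, and equality defines its boundary $\gamma^*$. *)

(* Defs.v *)
From HB Require Import structures.
From mathcomp Require Import all_boot all_order all_algebra.
From mathcomp Require Import all_classical all_reals all_analysis.
Set Implicit Arguments. Unset Strict Implicit. Unset Printing Implicit Defensive.
Import Order.TTheory GRing.Theory Num.Theory.
Local Open Scope classical_set_scope.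
Local Open Scope ring_scope.

Definition gamma_integrand {R : realType} (a t : R) : R :=
  t `^ (a - 1) * expR (- t).

Definition Gammaf {R : realType} (a : R) : R :=
  Rintegral lebesgue_measure `]0, +oo[ (gamma_integrand a).

Definition regGammaP {R : realType} (a x : R) : R :=
  Rintegral lebesgue_measure `]0, x[ (gamma_integrand a) / Gammaf a.

Definition regGammaPinv {R : realType} (y a : R) : R :=
  xget 0 [set x | 0 < x /\ regGammaP a x = y].

(* Main.v *)
Require Import Defs.
From mathcomp Require Import all_boot all_order all_algebra.
From mathcomp Require Import all_classical all_reals all_analysis.
From mathcomp Require Import measurable_realfun lebesgue_measure lebesgue_integral.
From mathcomp Require Import lra.
Import Order.TTheory GRing.Theory Num.Theory.
Local Open Scope classical_set_scope.
Local Open Scope ring_scope.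

Section S.
Variable R : realType.
Implicit Types a x y : R.

Lemma gi_ge0 a t : 0 <= gamma_integrand a t.
Proof. by rewrite /gamma_integrand mulr_ge0 // ?powR_ge0 // expR_ge0. Qed.

Lemma gi_meas a : measurable_fun [set: R] (EFin \o gamma_integrand a).
Proof.
apply/measurable_EFinP; rewrite /gamma_integrand.
apply: measurable_funM; first exact: measurable_powR.
apply: measurableT_comp; first exact: measurable_expR.
exact: measurable_funN.
Qed.

Lemma gi_lb a x y : 0 < x -> x <= y ->
  exists2 c, 0 < c & forall t, x <= t <= y -> c <= gamma_integrand a t.
Proof.
move=> x0 xy.
exists (expR (- (`|a - 1| * (`|ln x| + `|ln y|))) * expR (- y)).
  by rewrite mulr_gt0 // expR_gt0.
move=> t /andP[xt ty]; have t0 : 0 < t by apply: lt_le_trans xt.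
rewrite /gamma_integrand /powR gt_eqF // ler_pM ?expR_ge0 // ler_expR; last by rewrite lerN2.
have lxt : ln x <= ln t by rewrite ler_ln // posrE.
have lty : ln t <= ln y by rewrite ler_ln // ?posrE // (lt_le_trans t0 ty).
have h1 : `|ln t| <= `|ln x| + `|ln y|.
  have := ler_norm (ln y); have := ler_norm (- ln x); rewrite normrN => ? ?.
  have := normr_ge0 (ln x); have := normr_ge0 (ln y) => ? ?.
  case: (lerP 0 (ln t)) => h.
    rewrite ger0_norm //; lra.
  rewrite ltr0_norm //; lra.
have h2 : - (`|a - 1| * `|ln t|) <= (a - 1) * ln t.
  by rewrite -normrM lerNnormlW.
apply: le_trans h2; rewrite lerN2 ler_wpM2l //.
Qed.

Definition E a (D : set R) := (\int[lebesgue_measure]_(t in D) (gamma_integrand a t)%:E)%E.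

Lemma gi_measD a (D : set R) : measurable_fun D (fun t => (gamma_integrand a t)%:E).
Proof. exact: measurable_funS (gi_meas a). Qed.

Lemma E_ge0 a (D : set R) : (0 <= E a D)%E.
Proof. by rewrite /E; apply: integral_ge0 => t _; rewrite lee_fin gi_ge0. Qed.

Lemma Ginf_fin a : 0 < Gammaf a -> E a `]0, +oo[ \is a fin_num.
Proof.
move=> G0; rewrite ge0_fin_numE ?E_ge0 // ltNge leye_eq; apply/negP => /eqP h.
by move: G0; rewrite /Gammaf /Rintegral -/(E a _) h ltxx.
Qed.

Lemma ED_fin a (D : set R) : 0 < Gammaf a -> measurable D -> D `<=` `]0, +oo[ ->
  E a D \is a fin_num.
Proof.
move=> G0 mD DS; rewrite ge0_fin_numE ?E_ge0 //.
have h : (E a D <= E a `]0%R, +oo[)%E.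
  rewrite /E; apply: ge0_subset_integral => //.
  - exact: gi_measD.
  - by move=> t _; rewrite lee_fin gi_ge0.
apply: (le_lt_trans h).
by rewrite -ge0_fin_numE ?E_ge0 // Ginf_fin.
Qed.

Lemma P_strict a x y : 0 < Gammaf a -> 0 < x -> x < y -> regGammaP a x < regGammaP a y.
Proof.
move=> G0 x0 xy.
pose A : set R := `]0, x[%classic; pose B : set R := `[x, y[%classic.
pose C : set R := `]0, y[%classic.
have sU : (`]0, y[%classic) = (`]0, x[%classic) `|` (`[x, y[%classic) :> set R.
  by rewrite (@itv_bndbnd_setU _ _ (BRight 0) (BLeft x) (BLeft y)) //= bnd_simp ltW.
have dj : [disjoint (`]0, x[%classic) & (`[x, y[%classic) :> set R].
  rewrite disj_set2E; apply/eqP/seteqP; split => // t /= [].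
  by rewrite !in_itv /= => /andP[_ h1] /andP[h2 _]; move: (lt_le_trans h1 h2); rewrite ltxx.
have S1 : (`]0, x[%classic) `<=` (`]0, +oo[%classic) :> Prop.
  by move=> t /=; rewrite !in_itv /= => /andP[-> _].
have S2 : (`[x, y[%classic) `<=` (`]0, +oo[%classic) :> Prop.
  by move=> t /=; rewrite !in_itv /= andbT => /andP[h _]; apply: lt_le_trans h.
have e : E a C = (E a A + E a B)%E.
  rewrite /E /C sU ge0_integral_setU //; first exact: gi_measD.
  by move=> t _; rewrite lee_fin gi_ge0.
have f1 := ED_fin a A G0 (measurable_itv _) S1.
have f2 := ED_fin a B G0 (measurable_itv _) S2.
have [c c0 hc] := gi_lb a x y x0 (ltW xy).
have J0 : 0 < fine (E a B).
  have : ((c * (y - x))%:E <= E a B)%E.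
    have -> : (c * (y - x))%:E = (\int[@lebesgue_measure R]_(t in B) (cst c%:E) t)%E.
      rewrite integral_cst // /B; have hB := @lebesgue_measure_itv R (Interval (BLeft x) (BLeft y)); move: hB; rewrite /= lte_fin xy /= => hB.
      transitivity (c%:E * (y - x)%:E)%E; last by congr (_ * _)%E; exact: (esym hB).
      by rewrite EFinM.
      exact: measurable_itv.
    rewrite /E; apply: ge0_le_integral => //.
    - exact: measurable_itv.
    - by move=> t _; rewrite /cst lee_fin ltW.
    all: try (exact: gi_measD); try (exact: measurable_cst).
    move=> t Bt; rewrite /cst lee_fin; apply: hc; move: Bt; rewrite /B /= in_itv /= => /andP[h1 h2].
    by rewrite h1 ltW.
  move=> h; apply: (lt_le_trans _ (fine_le _ _ h)) => //.
  by rewrite /= mulr_gt0 // subr_gt0.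
have hy : regGammaP a y = fine (E a C) / Gammaf a by [].
have hx : regGammaP a x = fine (E a A) / Gammaf a by [].
rewrite hx hy e (fineD f1 f2).
by rewrite ltr_pM2r ?invr_gt0 // ltrDl.
Qed.

Lemma P_mono a x y : 0 < Gammaf a -> 0 < x -> 0 < y ->
  (regGammaP a x <= regGammaP a y) = (x <= y).
Proof.
move=> G0 x0 y0; apply/idP/idP.
  by apply: contraTT; rewrite -!ltNge => h; apply: P_strict.
rewrite le_eqVlt => /predU1P[-> //|h]; exact/ltW/P_strict.
Qed.

Lemma Gammaf_ge0 a : 0 <= Gammaf a.
Proof. by rewrite /Gammaf /Rintegral -/(E a _) fine_ge0 // E_ge0. Qed.
End S.

Theorem mainTheorem2 (R : realType)
  (sigma2 P_tran theta_I rho_cont rho_out tau fs gamma : R) :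
  0 < sigma2 -> 0 < P_tran -> 0 < theta_I -> 0 < rho_cont ->
  0 < rho_out < 1 -> 0 < tau * fs -> 0 <= gamma ->
  let N := tau * fs in
  let a1 := N * (1 + gamma) ^+ 2 / (2 + 4 * gamma) in
  let b1 := sigma2 * (2 + 4 * gamma) / (N * (1 + gamma)) in
  b1 * regGammaPinv (1 - rho_out) a1 > sigma2 ->
  let Pstar := theta_I * P_tran / (b1 * regGammaPinv (1 - rho_out) a1 - sigma2) in
  (Pstar <= rho_cont <->
   rho_out <= 1 - regGammaP a1 ((theta_I * P_tran / rho_cont + sigma2) / b1)).
Proof.
move=> s0 P0 t0 r0 /andP[ro0 ro1] N0 g0 N a1 b1.
set x := regGammaPinv (1 - rho_out) a1 => hb Pstar.
have [x0 hx] : 0 < x /\ regGammaP a1 x = 1 - rho_out.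
  have [ex|nex] := pselect (exists z, 0 < z /\ regGammaP a1 z = 1 - rho_out).
    exact: (xgetPex 0 ex).
  have : x = 0 by apply: xgetPN => z hz; apply: nex; exists z.
  by move=> h; move: hb; rewrite h mulr0 ltNge ltW.
have G0 : 0 < Gammaf a1.
  rewrite lt_neqAle Gammaf_ge0 andbT eq_sym; apply/negP => /eqP h.
  by move: hx; rewrite /regGammaP h invr0 mulr0 => /eqP; rewrite eq_sym subr_eq0 gt_eqF.
have b0 : 0 < b1 by rewrite -(pmulr_lgt0 _ x0); apply: lt_trans hb.
have d0 : 0 < b1 * x - sigma2 by rewrite subr_gt0.
have ypos : 0 < (theta_I * P_tran / rho_cont + sigma2) / b1.
  by rewrite divr_gt0 // addr_gt0 // divr_gt0 // mulr_gt0.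
rewrite lerBrDr addrC -lerBrDr -hx P_mono //.
rewrite /Pstar ler_pdivrMr // ler_pdivrMr // -lerBrDr ler_pdivrMr // (mulrC x b1) (mulrC rho_cont).
by [].
Qed.
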